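(* Let $\mathsf k_1,\mathsf k_2,\mathsf k_3$ be nonzero, and let $(\{\lambda_j\}_{j\le L},\{\mu_h\}_{h\le M})$ be a solution of the Bethe equations satisfying $\lambda_l\ne\lambda_m$, $\mu_p\ne\mu_q$, $\mu_q\ne\lambda_m$ for all $l\ne m$, $p\ne q$, and $\{\mu_h\}\cap\{\xi_n\}=\emptyset$. Let $t_1(\lambda)=t_1(\lambda|\{\lambda_j\},\{\mu_h\})$, set $x_a=t_1(\xi_a)$ and let $t_n(\lambda)=t_n(\lambda|\{x_a\})$, $n\ge2$, be the interpolation polynomials. Then $$t_2(\lambda)=\Lambda_1(\lambda)\big(\mathsf k_1t_1(\lambda+\eta)+\mathsf k_2\mathsf k_3d(\lambda)\big)/\mathsf k_1=\Lambda_1(\lambda)\big(\Lambda_1(\lambda+\eta)-\Lambda_2(\lambda+\eta)-\Lambda_3(\lambda+\eta)+\mathsf k_2\mathsf k_3d(\lambda)/\mathsf k_1\big),$$ and $t_{n+1}(\lambda)=\Lambda_1(\lambda)\,t_n(\lambda+\eta)$ for all $n\ge2$.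
   Context: Fix a nonzero complex number $\eta$, an integer $\mathsf N\ge1$ and complex inhomogeneities $\xi_1,\dots,\xi_{\mathsf N}$ with $\xi_a-\xi_b\notin\eta\mathbb Z$ for $a\ne b$. This concerns the fundamental $gl_{1|2}$ model with diagonal twist $K=\operatorname{diag}(\mathsf k_1,\mathsf k_2,\mathsf k_3)$. Write $d(\lambda)=\prod_{n=1}^{\mathsf N}(\lambda-\xi_n)$, $a(\lambda)=d(\lambda+\eta)$, and $f^{(m)}_a(\lambda)=\prod_{b\ne a}\frac{\lambda-\xi_b}{\xi_a-\xi_b}\prod_{b=1}^{\mathsf N}\prod_{r=1}^{m-1}\frac{1}{\xi_a-\xi_b+r\eta}$. Let $T_{\infty,1}=\mathsf k_1-\mathsf k_2-\mathsf k_3$ and $T_{\infty,n}=\mathsf k_1^{n-2}(\mathsf k_1-\mathsf k_2)(\mathsf k_1-\mathsf k_3)$ for $n\ge2$. Interpolation polynomials in unknowns $\{x_a\}$: $t_1(\lambda|\{x_a\})=T_{\infty,1}d(\lambda)+\sum_af^{(1)}_a(\lambda)x_a$ and, for $n\ge1$, $t_{n+1}(\lambda|\{x_a\})=\prod_{r=1}^nd(\lambda+r\eta)\big[T_{\infty,n+1}d(\lambda)+\sum_af^{(n+1)}_a(\lambda)t_n(\xi_a+\eta|\{x_a\})x_a\big]$. Bethe Ansatz: $Q_1(\lambda)=\prod_{l=1}^L(\lambda-\lambda_l)$, $Q_2(\lambda)=\prod_{m=1}^M(\lambda-\mu_m)$; Bethe equations: $\mathsf k_1Q_2(\lambda_j)a(\lambda_j)=\mathsf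 k_2d(\lambda_j)Q_2(\lambda_j+\eta)$ ($j\le L$) and $\mathsf k_2Q_2(\mu_j+\eta)Q_1(\mu_j-\eta)=-\mathsf k_3Q_2(\mu_j-\eta)Q_1(\mu_j)$ ($j\le M$). Define $\Lambda_1(\lambda)=\mathsf k_1a(\lambda)\frac{Q_1(\lambda-\eta)}{Q_1(\lambda)}$, $\Lambda_2(\lambda)=\mathsf k_2d(\lambda)\frac{Q_1(\lambda-\eta)Q_2(\lambda+\eta)}{Q_1(\lambda)Q_2(\lambda)}$, $\Lambda_3(\lambda)=\mathsf k_3d(\lambda)\frac{Q_2(\lambda-\eta)}{Q_2(\lambda)}$, and $t_1(\lambda|\{\lambda_j\},\{\mu_h\})=\Lambda_1(\lambda)-\Lambda_2(\lambda)-\Lambda_3(\lambda)$. *)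

(* Defs.v *)
(* The complex field is modelled by an arbitrary
   numClosedFieldType R (algebraically closed, characteristic 0). *)
From HB Require Import structures.
From mathcomp Require Import all_boot all_order all_algebra.
Set Implicit Arguments. Unset Strict Implicit. Unset Printing Implicit Defensive.
Import Order.TTheory GRing.Theory Num.Theory.
Local Open Scope ring_scope.

Section GL12.
Variable R : numClosedFieldType.

Definition dfun (N : nat) (xi : 'I_N -> R) (l : R) : R :=
  \prod_(n < N) (l - xi n).

Definition Qfun (L : nat) (r : 'I_L -> R) (l : R) : R :=
  \prod_(j < L) (l - r j).

Definition Tinf (k1 k2 k3 : R) (n : nat) : R :=
  if n == 1%N then k1 - k2 - k3
  else k1 ^+ (n - 2) * (k1 - k2) * (k1 - k3).

Definition fcoef (N : nat) (xi : 'I_N -> R) (eta : R) (m : nat) (a : 'I_N) (l : R) : R :=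
  (\prod_(b < N | b != a) ((l - xi b) / (xi a - xi b))) *
  \prod_(b < N) \prod_(1 <= r < m) (xi a - xi b + r%:R * eta)^-1.

(* interpolation polynomials t_n(l | {x_a}), n >= 1 (index 0 is unused, set to 0) *)
Fixpoint tinterp (N : nat) (xi : 'I_N -> R) (eta k1 k2 k3 : R) (x : 'I_N -> R)
  (n : nat) (l : R) {struct n} : R :=
  match n with
  | 0 => 0
  | 1 => Tinf k1 k2 k3 1 * dfun xi l + \sum_(a < N) fcoef xi eta 1 a l * x a
  | (m.+1 as k).+1 =>
      (\prod_(1 <= r < k.+1) dfun xi (l + r%:R * eta)) *
      (Tinf k1 k2 k3 k.+1 * dfun xi l +
       \sum_(a < N) fcoef xi eta k.+1 a l * tinterp xi eta k1 k2 k3 x k (xi a + eta) * x a)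
  end.

(* Lambda_1, Lambda_2, Lambda_3 (rational functions, evaluated pointwise) *)
Definition Lam1 (N L : nat) (xi : 'I_N -> R) (eta k1 : R) (lam : 'I_L -> R) (l : R) : R :=
  k1 * dfun xi (l + eta) * Qfun lam (l - eta) / Qfun lam l.

Definition Lam2 (N L M : nat) (xi : 'I_N -> R) (eta k2 : R)
  (lam : 'I_L -> R) (mu : 'I_M -> R) (l : R) : R :=
  k2 * dfun xi l * (Qfun lam (l - eta) * Qfun mu (l + eta)) / (Qfun lam l * Qfun mu l).

Definition Lam3 (N M : nat) (xi : 'I_N -> R) (eta k3 : R) (mu : 'I_M -> R) (l : R) : R :=
  k3 * dfun xi l * Qfun mu (l - eta) / Qfun mu l.

Definition t1BA (N L M : nat) (xi : 'I_N -> R) (eta k1 k2 k3 : R)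
  (lam : 'I_L -> R) (mu : 'I_M -> R) (l : R) : R :=
  Lam1 xi eta k1 lam l - Lam2 xi eta k2 lam mu l - Lam3 xi eta k3 mu l.

(* p is the polynomial t_1(l | {lambda_j},{mu_h}): it agrees with the
   rational expression wherever the latter is defined *)
Definition is_t1poly (N L M : nat) (xi : 'I_N -> R) (eta k1 k2 k3 : R)
  (lam : 'I_L -> R) (mu : 'I_M -> R) (p : {poly R}) : Prop :=
  forall l : R, Qfun lam l != 0 -> Qfun mu l != 0 ->
    p.[l] = t1BA xi eta k1 k2 k3 lam mu l.

End GL12.

(* Main.v *)
Set Warnings "-notation-overridden,-ambiguous-paths,-notation-incompatible-prefix".
From HB Require Import structures.
From mathcomp Require Import all_boot all_order all_algebra.
From mathcomp Require Import ring lra zify.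
Require Import Defs.
Import Order.TTheory GRing.Theory Num.Theory.
Set Implicit Arguments. Unset Strict Implicit. Unset Printing Implicit Defensive.
Local Open Scope ring_scope.

Section GenS.
Variable R : numClosedFieldType.

Definition dl (n : nat) (c : R) (p : {poly R}) := (size p <= n.+1)%N /\ p`_n = c.

Lemma dl_add n c c' p q : dl n c p -> dl n c' q -> dl n (c + c') (p + q).
Proof.
move=> [s1 e1] [s2 e2]; split; last by rewrite coefD e1 e2.
by apply: leq_trans (size_polyD _ _) _; rewrite geq_max s1 s2.
Qed.

Lemma dl_opp n c p : dl n c p -> dl n (- c) (- p).
Proof. by move=> [s1 e1]; split; rewrite ?size_polyN // coefN e1. Qed.

Lemma dl_sub n c c' p q : dl n c p -> dl n c' q -> dl n (c - c') (p - q).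
Proof. by move=> h1 h2; apply: dl_add h1 (dl_opp h2). Qed.

Lemma dl_scale n c k p : dl n c p -> dl n (k * c) (k *: p).
Proof.
move=> [s1 e1]; split; last by rewrite coefZ e1.
exact: leq_trans (size_scale_leq _ _) s1.
Qed.

Lemma dl_eqc n c c' p : c = c' -> dl n c p -> dl n c' p.
Proof. by move=> ->. Qed.

Lemma dl_eqn n n' c p : n = n' -> dl n c p -> dl n' c p.
Proof. by move=> ->. Qed.

Lemma dl_mul n m c c' p q : dl n c p -> dl m c' q -> dl (n + m) (c * c') (p * q).
Proof.
move=> [s1 e1] [s2 e2]; split.
  apply: leq_trans (size_polyMleq _ _) _.
  by move: s1 s2; lia.
rewrite coefM (bigD1 (@Ordinal (n+m).+1 n (leq_addr m n))) //= e1 addKn e2.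
rewrite big1 ?addr0 // => [[j hj]] /= hne.
have hne' : j != n by apply: contra hne => /eqP hj'; apply/eqP; apply: val_inj.
case: (ltngtP j n) hne' => // hjn _.
  have -> : q`_(n + m - j) = 0 by apply/(leq_sizeP _ _ s2); lia.
  by rewrite mulr0.
have -> : p`_j = 0 by apply/(leq_sizeP _ _ s1).
by rewrite mul0r.
Qed.

Lemma dl_monic n p : p \is monic -> size p = n.+1 -> dl n 1 p.
Proof.
move=> /monicP hm hs; split; first by rewrite hs.
by rewrite -hm lead_coefE hs.
Qed.

Lemma dl_div m n c P q : P \is monic -> size P = m.+1 -> dl (m + n) c (P * q) -> dl n c q.
Proof.
move=> hm hs [s1 e1].
have hsq : (size q <= n.+1)%N.
  have [->|qn0] := eqVneq q 0; first by rewrite size_poly0.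
  move: s1; rewrite size_monicM // hs /=; lia.
case: (dl_mul (dl_monic hm hs) (conj hsq erefl)) => _ h.
by split => //; rewrite -e1 h mul1r.
Qed.

Lemma dl_comp n c p a : dl n c p -> dl n c (p \Po ('X + a%:P)).
Proof.
move=> [s1 e1]; have hs : size (p \Po ('X + a%:P)) = size p.
  by rewrite size_comp_poly2 // size_XaddC.
split; first by rewrite hs.
case: (ltngtP (size p) n.+1) s1 => // h _.
  rewrite -e1; have -> : p`_n = 0 by apply/(leq_sizeP _ _ h).
  have hs' : (size (p \Po ('X + a%:P)) <= n)%N by rewrite hs.
  by apply: (leq_sizeP _ _ hs').
have := @lead_coef_comp R p ('X + a%:P); rewrite size_XaddC lead_coefXaddC expr1n mulr1.
by rewrite !lead_coefE hs h /= => ->.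
Qed.

Lemma comp_monic (p : {poly R}) (a : R) : p \is monic -> p \Po ('X + a%:P) \is monic.
Proof.
move=> /monicP hm; apply/monicP.
by rewrite lead_coef_comp ?size_XaddC // lead_coefXaddC expr1n mulr1.
Qed.

Lemma size_comp (p : {poly R}) (a : R) : size (p \Po ('X + a%:P)) = size p.
Proof. by rewrite size_comp_poly2 // size_XaddC. Qed.

Lemma poly_all_roots (W : {poly R}) : (forall l, W.[l] = 0) -> W = 0.
Proof.
move=> h; apply/eqP; apply/negPn/negP => hW.
have := max_poly_roots hW (rs := [seq i%:R | i <- iota 0 (size W)]).
rewrite size_map size_iota ltnn => H; suff : false by []; apply: H.
  by apply/allP => x /mapP [i _ ->]; apply/rootP.
by rewrite map_inj_uniq ?iota_uniq // => i j /eqP; rewrite eqr_nat => /eqP.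
Qed.

Definition PP K (r : 'I_K -> R) (c : R) : {poly R} := \prod_(i < K) ('X - (r i - c)%:P).


Lemma PP_eval K (r : 'I_K -> R) c l : (PP r c).[l] = Qfun r (l + c).
Proof.
rewrite /PP horner_prod; apply: eq_bigr => i _; rewrite hornerXsubC; ring.
Qed.

Lemma PP_monic K (r : 'I_K -> R) c : PP r c \is monic.
Proof. exact: monic_prod_XsubC. Qed.

Lemma PP_size K (r : 'I_K -> R) c : size (PP r c) = K.+1.
Proof. by rewrite /PP size_prod_XsubC /index_enum unlock -enumT size_enum_ord. Qed.

Lemma PP_dl K (r : 'I_K -> R) c : dl K 1 (PP r c).
Proof. exact: dl_monic (PP_monic _ _) (PP_size _ _). Qed.

Lemma PP_neq0 K (r : 'I_K -> R) c : PP r c != 0.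
Proof. by rewrite -size_poly_gt0 PP_size. Qed.

Lemma Qfun_eq0 K (r : 'I_K -> R) l : Qfun r l = 0 -> exists i, l = r i.
Proof.
move/eqP/prodf_eq0 => [i _]; rewrite subr_eq0 => /eqP ->; by exists i.
Qed.

Lemma Qfun_root K (r : 'I_K -> R) i : Qfun r (r i) = 0.
Proof. by apply/eqP/prodf_eq0; exists i => //; rewrite subrr. Qed.

Lemma PP_dvd K (r : 'I_K -> R) (P : {poly R}) :
  injective r -> (forall i, P.[r i] = 0) -> exists q, P = q * PP r 0.
Proof.
move=> hr hP.
have := uniq_roots_prod_XsubC (p := P) (rs := [seq r i | i <- index_enum 'I_K]).
rewrite big_map uniq_rootsE map_inj_uniq ?index_enum_uniq //.
case.
- by apply/allP => x /mapP [i _ ->]; apply/rootP.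
- done.
move=> q ->; exists q; congr (_ * _); rewrite /PP; apply: eq_bigr => i _.
by rewrite subr0.
Qed.

Lemma lagrange N (xi : 'I_N -> R) (T : R) (E : {poly R}) :
  injective xi -> dl N T E -> forall l,
  E.[l] = T * Qfun xi l +
     \sum_(a < N) (\prod_(b < N | b != a) ((l - xi b) / (xi a - xi b))) * E.[xi a].
Proof.
move=> hxi [s1 e1].
pose lP (a : 'I_N) := \prod_(b < N | b != a) ('X - (xi b)%:P).
pose ca (a : 'I_N) := \prod_(b < N | b != a) (xi a - xi b)^-1.
have lPe a l : (lP a).[l] = \prod_(b < N | b != a) (l - xi b).
  by rewrite /lP horner_prod; apply: eq_bigr => b _; rewrite hornerXsubC.
have lPs a : size (lP a) = N.
  have := PP_size xi 0; rewrite /PP (bigD1 a) //=.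
  rewrite size_monicM ?monicXsubC ?monic_neq0 ?monic_prod_XsubC // size_XsubC /=.
  have -> : \prod_(i < N | i != a) ('X - (xi i - 0)%:P) = lP a.
    by apply: eq_bigr => i _; rewrite subr0.
  by case.
pose W := E - T *: PP xi 0 - \sum_(a < N) (ca a * E.[xi a]) *: lP a.
have We l : W.[l] = E.[l] - T * Qfun xi l - \sum_(a < N) (ca a * E.[xi a]) * (lP a).[l].
  rewrite /W !hornerE PP_eval addr0 horner_sum; congr (_ - _).
  by apply: eq_bigr => a _; rewrite hornerZ.
have W0 : W = 0.
  apply/eqP; apply/negPn/negP => hW.
  have hs : (size W <= N)%N.
    apply/leq_sizeP => j hj.
    have sW : (size W <= N.+1)%N.
      rewrite /W; apply: leq_trans (size_polyD _ _) _; rewrite geq_max; apply/andP; split.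
        apply: leq_trans (size_polyD _ _) _; rewrite geq_max size_polyN s1 /=.
        by apply: leq_trans (size_scale_leq _ _) _; rewrite PP_size.
      rewrite size_polyN; apply: leq_trans (size_sum _ _ _) _.
      apply/bigmax_leqP => a _; apply: leq_trans (size_scale_leq _ _) _.
      by rewrite lPs.
    have [hjN| ->] : (N < j)%N \/ j = N by lia.
      by apply: (leq_sizeP _ _ sW).
    rewrite /W coefB coefB coefZ e1 coef_sum.
    have := PP_dl xi 0 => -[_ ->]; rewrite mulr1 subrr sub0r big1 ?oppr0 // => a _.
    by rewrite coefZ (leq_sizeP _ _ (eq_leq (lPs a))) // mulr0.
  have := max_poly_roots hW (rs := [seq xi i | i <- enum 'I_N]).
  rewrite size_map size_enum_ord map_inj_uniq ?enum_uniq // ltnNge hs => H.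
  suff : false by []; apply: H => //.
  apply/allP => x /mapP [b _ ->]; apply/rootP; rewrite We.
  have -> : Qfun xi (xi b) = 0 by apply: Qfun_root.
  rewrite mulr0 subr0 (bigD1 b) //= big1 ?addr0.
    rewrite lPe /ca -mulrA mulrCA -big_split /= big1 ?mulr1 ?subrr // => c hc.
    by rewrite mulVf // subr_eq0; apply: contra hc => /eqP /hxi ->.
  move=> a hab; rewrite lPe (bigD1 b) 1?eq_sym //= subrr mul0r mulr0 //.
move=> l; move/(congr1 (fun p => p.[l])): W0; rewrite We horner0.
move/eqP; rewrite subr_eq0 subr_eq => /eqP ->; rewrite addrC; congr (_ + _).
apply: eq_bigr => a _; rewrite lPe /ca mulrAC -big_split /=; congr (_ * _).
by apply: eq_bigr => b _; rewrite mulrC.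
Qed.

End GenS.

Definition hE := (hornerD, hornerN, hornerM, hornerC, hornerZ).

Section Main.
Variables (R : numClosedFieldType) (N L M : nat) (xi : 'I_N -> R)
  (eta k1 k2 k3 : R) (lam : 'I_L -> R) (mu : 'I_M -> R).
Hypothesis Heta : eta != 0.
Hypothesis Hxi : forall a b : 'I_N, a != b -> forall z : int, xi a - xi b != z%:~R * eta.
Hypothesis Hk1 : k1 != 0.
Hypothesis BAE1 : forall j : 'I_L, k1 * Qfun mu (lam j) * dfun xi (lam j + eta)
                    = k2 * dfun xi (lam j) * Qfun mu (lam j + eta).
Hypothesis BAE2 : forall j : 'I_M, k2 * Qfun mu (mu j + eta) * Qfun lam (mu j - eta)
                    = - (k3 * Qfun mu (mu j - eta) * Qfun lam (mu j)).
Hypothesis Hlam : injective lam.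
Hypothesis Hmu : injective mu.
Hypothesis Hml : forall (q : 'I_M) (m : 'I_L), mu q != lam m.
Hypothesis Hmx : forall (h : 'I_M) (n : 'I_N), mu h != xi n.

Lemma dQ l : dfun xi l = Qfun xi l. Proof. by []. Qed.

Lemma xi_inj : injective xi.
Proof.
move=> a b e; apply/eqP; apply/negPn/negP => hab.
by have := Hxi hab 0; rewrite e subrr mul0r eqxx.
Qed.

Lemma Q2xi a : Qfun mu (xi a) != 0.
Proof. by apply/eqP => /Qfun_eq0 [h hh]; have := Hmx h a; rewrite -hh eqxx. Qed.

Lemma Q2lam j : Qfun mu (lam j) != 0.
Proof. by apply/eqP => /Qfun_eq0 [h hh]; have := Hml h j; rewrite -hh eqxx. Qed.

Lemma Q1mu h : Qfun lam (mu h) != 0.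
Proof. by apply/eqP => /Qfun_eq0 [j hj]; have := Hml h j; rewrite hj eqxx. Qed.

Lemma Q1xi a : Qfun lam (xi a) != 0.
Proof.
apply/eqP => /Qfun_eq0 [j hj]; have := BAE1 j; rewrite -hj !dQ Qfun_root mulr0 mul0r.
move/eqP; rewrite !mulf_eq0 (negbTE Hk1) (negbTE (Q2xi a)) /= => /eqP /Qfun_eq0 [b hb].
have hab : a != b.
  by apply/eqP => hab; move: hb; rewrite hab -{2}[xi b]addr0 => /addrI /eqP; rewrite (negbTE Heta).
have := Hxi hab (-1); rewrite -hb; apply/negP; rewrite negbK; apply/eqP.
rewrite rmorphN rmorph1 /=; ring.
Qed.

Lemma Q2lame j : Qfun mu (lam j + eta) != 0.
Proof.
apply/eqP => h0; have := BAE1 j; rewrite h0 mulr0 => /eqP.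
rewrite !mulf_eq0 (negbTE Hk1) (negbTE (Q2lam j)) /= dQ => /eqP /Qfun_eq0 [n hn].
move: h0 => /Qfun_eq0 [h hh]; by have := Hmx h n; rewrite -hh hn eqxx.
Qed.

Lemma dshift_neq0 a (r : nat) : (0 < r)%N -> Qfun xi (xi a + r%:R * eta) != 0.
Proof.
move=> hr; apply/eqP => /Qfun_eq0 [b hb].
have [hab|hab] := eqVneq a b.
  move: hb; rewrite hab -{2}[xi b]addr0 => /addrI /eqP; rewrite mulf_eq0 (negbTE Heta) orbF.
  by rewrite pnatr_eq0; case: r hr.
have := Hxi hab (- (r%:Z)); rewrite -hb; apply/negP; rewrite negbK; apply/eqP.
rewrite rmorphN /=; ring.
Qed.

Definition d0 := PP xi 0.
Definition a0 := PP xi eta.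
Definition Q1 := PP lam 0.
Definition Q1m := PP lam (- eta).
Definition Q2 := PP mu 0.
Definition Q2p := PP mu eta.
Definition Q2m := PP mu (- eta).

Lemma evE (K : nat) (r : 'I_K -> R) c l : (PP r c).[l] = Qfun r (l + c).
Proof. exact: PP_eval. Qed.

Definition G := k1%:P * (a0 * Q2) - k2%:P * (d0 * Q2p).

Lemma Groot j : G.[lam j] = 0.
Proof.
rewrite /G !hE /a0 /Q2 /d0 /Q2p !evE !addr0.
have h := BAE1 j; rewrite !dQ in h.
transitivity (k1 * Qfun mu (lam j) * Qfun xi (lam j + eta)
   - k2 * Qfun xi (lam j) * Qfun mu (lam j + eta)); first ring.
by rewrite h subrr.
Qed.

Definition H := G %/ Q1.

Lemma GH : G = H * Q1.
Proof.
have [q eq] := PP_dvd Hlam Groot.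
by rewrite /H eq mulpK ?PP_neq0 // /Q1.
Qed.

Definition Kp := Q1m * H - k3%:P * (d0 * Q2m).

Lemma Kroot h : Kp.[mu h] = 0.
Proof.
have e : Kp.[mu h] * Qfun lam (mu h) = 0.
  have eG := congr1 (fun p => p.[mu h]) GH; rewrite /= hornerM /Q1 evE addr0 in eG.
  rewrite /Kp !hE /Q1m /d0 /Q2m !evE addr0 mulrBl -mulrA -eG.
  rewrite /G !hE /a0 /Q2 /d0 /Q2p !evE !addr0 Qfun_root.
  have b2 := BAE2 h.
  transitivity (- Qfun xi (mu h) * (k2 * Qfun mu (mu h + eta) * Qfun lam (mu h - eta)
     + k3 * Qfun mu (mu h - eta) * Qfun lam (mu h))); first ring.
  by rewrite b2 addNr mulr0.
by move/eqP: e; rewrite mulf_eq0 (negbTE (Q1mu h)) orbF => /eqP.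
Qed.

Definition p0 := Kp %/ Q2.

Lemma Kp0 : Kp = p0 * Q2.
Proof.
have [q eq] := PP_dvd Hmu Kroot.
by rewrite /p0 eq mulpK ?PP_neq0 // /Q2.
Qed.

Definition F := Q1m * G - k3%:P * (d0 * Q2m * Q1).

Lemma key : Q1 * Q2 * p0 = F.
Proof.
rewrite /F GH -mulrA [Q2 * _]mulrC -Kp0 /Kp; ring.
Qed.

Lemma p0_val l : Qfun lam l != 0 -> Qfun mu l != 0 ->
  p0.[l] = t1BA xi eta k1 k2 k3 lam mu l.
Proof.
move=> h1 h2.
have eK := congr1 (fun p => p.[l]) Kp0; rewrite /= hornerM /Q2 evE addr0 in eK.
have eG := congr1 (fun p => p.[l]) GH; rewrite /= hornerM /Q1 evE addr0 in eG.
have hp : p0.[l] = Kp.[l] / Qfun mu l by rewrite eK mulfK.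
have hH : H.[l] = G.[l] / Qfun lam l by rewrite eG mulfK.
rewrite hp /Kp !hE hH /G !hE /Q1m /d0 /Q2m /a0 /Q2 /Q2p !evE !addr0.
rewrite /t1BA /Lam1 /Lam2 /Lam3 !dQ.
by field; rewrite h1 h2.
Qed.

Lemma p0_uniq p : is_t1poly xi eta k1 k2 k3 lam mu p -> p = p0.
Proof.
move=> hp.
have W0 : Q1 * Q2 * (p - p0) = 0.
  apply: poly_all_roots => l; rewrite !hE /Q1 /Q2 !evE !addr0.
  have [e1|n1] := eqVneq (Qfun lam l) 0; first by rewrite e1 !mul0r.
  have [e2|n2] := eqVneq (Qfun mu l) 0; first by rewrite e2 mulr0 mul0r.
  by rewrite hp // p0_val // subrr mulr0.
move/eqP: W0; rewrite !mulf_eq0 /Q1 /Q2 !(negbTE (PP_neq0 _ _)) /= subr_eq0.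
by move/eqP.
Qed.


Lemma dl_C n c k (p : {poly R}) : dl n c p -> dl n (k * c) (k%:P * p).
Proof. by rewrite mul_polyC; apply: dl_scale. Qed.

Lemma Q12_monic : Q1 * Q2 \is monic.
Proof. by rewrite monicMl /Q1 /Q2 PP_monic. Qed.

Lemma Q12_size : size (Q1 * Q2) = (L + M).+1.
Proof. rewrite /Q1 /Q2 size_monicM ?PP_neq0 ?PP_monic // !PP_size; lia. Qed.

Lemma dl_p0 : dl N (k1 - k2 - k3) p0.
Proof.
have dG : dl (N + M) (k1 * (1 * 1) - k2 * (1 * 1)) G.
  by apply: dl_sub; apply: dl_C; apply: dl_mul; apply: PP_dl.
have dF : dl ((L + M) + N) (1 * (k1 * (1 * 1) - k2 * (1 * 1)) - k3 * (1 * 1 * 1)) F.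
  apply: dl_sub.
    by apply: dl_eqn (dl_mul (PP_dl lam (-eta)) dG); lia.
  apply: dl_C; apply: dl_eqn (dl_mul (dl_mul (PP_dl xi 0) (PP_dl mu (-eta))) (PP_dl lam 0)).
  lia.
rewrite -key in dF.
have := dl_div Q12_monic Q12_size dF.
by apply: dl_eqc; ring.
Qed.

Definition Cp := k1%:P * (p0 \Po ('X + eta%:P)) + (k2 * k3)%:P * d0.

Lemma Cp_val l : Cp.[l] = k1 * p0.[l + eta] + k2 * k3 * Qfun xi l.
Proof. by rewrite /Cp !hE horner_comp !hE hornerX /d0 evE addr0. Qed.

Lemma Cproot j : Cp.[lam j] = 0.
Proof.
have e : Cp.[lam j] * Qfun mu (lam j + eta) = 0.
  have eK := congr1 (fun p => p.[lam j + eta]) Kp0; rewrite /= hornerM /Q2 evE addr0 in eK.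
  rewrite /Kp !hE /Q1m /d0 /Q2m !evE addr0 addrK Qfun_root mul0r sub0r in eK.
  rewrite Cp_val mulrDl -(mulrA k1) -eK.
  have h := BAE1 j; rewrite !dQ in h.
  transitivity (- k3 * (k1 * Qfun mu (lam j) * Qfun xi (lam j + eta)
   - k2 * Qfun xi (lam j) * Qfun mu (lam j + eta))); first ring.
  by rewrite h subrr mulr0.
by move/eqP: e; rewrite mulf_eq0 (negbTE (Q2lame j)) orbF => /eqP.
Qed.

Definition D := Cp %/ Q1.

Lemma CpD : Cp = D * Q1.
Proof.
have [q eq] := PP_dvd Hlam Cproot.
by rewrite /D eq mulpK ?PP_neq0 // /Q1.
Qed.

Lemma D_val l : D.[l] * Qfun lam l = k1 * p0.[l + eta] + k2 * k3 * Qfun xi l.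
Proof.
by rewrite -Cp_val CpD hornerM /Q1 evE addr0.
Qed.

Definition cc := (k1 - k2) * (k1 - k3).

Lemma dl_Cp : dl N cc Cp.
Proof.
apply: dl_eqc (dl_add (dl_C k1 (dl_comp eta dl_p0)) (dl_C (k2 * k3) (PP_dl xi 0))).
rewrite /cc; ring.
Qed.

Definition E' (k : nat) := (k1 ^+ k)%:P * (Q1m * (D \Po ('X + (k%:R * eta)%:P))).

Lemma dl_E' k : dl N (k1 ^+ k * cc) (E' k).
Proof.
apply: dl_C; set s := k%:R * eta.
have hm := comp_monic s (PP_monic lam 0).
have hs : size (PP lam 0 \Po ('X + s%:P)) = L.+1 by rewrite size_comp PP_size.
apply: (dl_div hm hs).
have -> : (PP lam 0 \Po ('X + s%:P)) * (Q1m * (D \Po ('X + s%:P)))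
   = Q1m * (Cp \Po ('X + s%:P)).
  by rewrite CpD comp_polyM /Q1; ring.
apply: dl_eqc (dl_mul (PP_dl lam (-eta)) (dl_comp s dl_Cp)); ring.
Qed.

Lemma E'_val k l : (E' k).[l] = k1 ^+ k * (Qfun lam (l - eta) * D.[l + k%:R * eta]).
Proof. by rewrite /E' !hE horner_comp !hE hornerX /Q1m evE. Qed.


Lemma x_val a : p0.[xi a] = k1 * Qfun xi (xi a + eta) * Qfun lam (xi a - eta) / Qfun lam (xi a).
Proof.
rewrite p0_val ?Q1xi ?Q2xi // /t1BA /Lam1 /Lam2 /Lam3 !dQ Qfun_root.
by rewrite !(mulr0, mul0r, subr0).
Qed.

Lemma t1_val l : tinterp xi eta k1 k2 k3 (fun a => p0.[xi a]) 1 l = p0.[l].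
Proof.
rewrite (lagrange xi_inj dl_p0 l) /= /Tinf /= dQ; congr (_ + _).
apply: eq_bigr => a _; rewrite /fcoef; congr (_ * _).
rewrite [X in _ * X]big1 ?mulr1 // => b _; by rewrite big_geq.
Qed.

Lemma step k l (tk : R -> R) :
  (forall a, tk (xi a + eta) * p0.[xi a] =
     (\prod_(1 <= r < k.+2) Qfun xi (xi a + r%:R * eta)) * (E' k).[xi a]) ->
  Tinf k1 k2 k3 k.+2 * dfun xi l +
    \sum_(a < N) fcoef xi eta k.+2 a l * tk (xi a + eta) * p0.[xi a] = (E' k).[l].
Proof.
move=> hyp.
have -> : Tinf k1 k2 k3 k.+2 = k1 ^+ k * cc by rewrite /Tinf /= !subSS subn0 /cc mulrA.
rewrite (lagrange xi_inj (dl_E' k) l) dQ; congr (_ + _).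
apply: eq_bigr => a _; rewrite /fcoef -!mulrA; congr (_ * _).
rewrite hyp mulrA.
set P := \prod_(1 <= r < k.+2) Qfun xi (xi a + r%:R * eta).
have hP : P != 0.
  rewrite /P prodf_seq_neq0; apply/allP => r; rewrite mem_index_iota => /andP [hr _].
  exact: dshift_neq0.
suff -> : \prod_(b < N) \prod_(1 <= r < k.+2) (xi a - xi b + r%:R * eta)^-1 = P^-1.
  by rewrite mulVf ?mul1r.
rewrite exchange_big /= -prodfV; apply: eq_bigr => r _.
rewrite -prodfV /Qfun; apply: eq_bigr => b _; congr (_^-1); ring.
Qed.

Lemma tS m l (x : 'I_N -> R) : tinterp xi eta k1 k2 k3 x m.+2 l =
  (\prod_(1 <= r < m.+2) dfun xi (l + r%:R * eta)) *
  (Tinf k1 k2 k3 m.+2 * dfun xi l +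
   \sum_(a < N) fcoef xi eta m.+2 a l * tinterp xi eta k1 k2 k3 x m.+1 (xi a + eta) * x a).
Proof. by []. Qed.

Lemma main_claim k l : tinterp xi eta k1 k2 k3 (fun a => p0.[xi a]) k.+2 l =
  (\prod_(1 <= r < k.+2) Qfun xi (l + r%:R * eta)) * (E' k).[l].
Proof.
elim: k l => [|k IH] l; rewrite tS; congr (_ * _); apply: step => a.
  rewrite t1_val big_nat1 E'_val x_val expr0 mul1r.
  have hD := D_val (xi a); rewrite Qfun_root mulr0 addr0 in hD.
  have hD' : D.[xi a] = k1 * p0.[xi a + eta] / Qfun lam (xi a).
    by rewrite -hD mulfK ?Q1xi.
  have -> : xi a + 0%:R * eta = xi a by ring.
  have -> : xi a + 1%:R * eta = xi a + eta by ring.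
  rewrite hD'; have := Q1xi a => h1; field; by rewrite h1.
rewrite IH x_val !E'_val [in RHS]big_nat_recl //.
have eP : \prod_(1 <= r < k.+2) Qfun xi (xi a + eta + r%:R * eta)
   = \prod_(1 <= r < k.+2) Qfun xi (xi a + r.+1%:R * eta).
  by apply: eq_bigr => r _; congr (Qfun xi _); ring.
have e1 : xi a + eta + k%:R * eta = xi a + k.+1%:R * eta by ring.
have e2 : xi a + eta - eta = xi a by ring.
have e3 : xi a + 1%:R * eta = xi a + eta by ring.
rewrite eP e1 e2 e3 exprS; have := Q1xi a => h1; field; by rewrite h1.
Qed.

Lemma final_stmt :
  (exists p : {poly R}, is_t1poly xi eta k1 k2 k3 lam mu p) /\
  (forall p : {poly R}, is_t1poly xi eta k1 k2 k3 lam mu p ->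
   let x := fun a : 'I_N => p.[xi a] in
   let t := tinterp xi eta k1 k2 k3 x in
   (forall l : R, Qfun lam l != 0 ->
      t 2%N l = Lam1 xi eta k1 lam l * (k1 * p.[l + eta] + k2 * k3 * dfun xi l) / k1) /\
   (forall l : R, Qfun lam l != 0 -> Qfun lam (l + eta) != 0 -> Qfun mu (l + eta) != 0 ->
      t 2%N l = Lam1 xi eta k1 lam l *
        (Lam1 xi eta k1 lam (l + eta) - Lam2 xi eta k2 lam mu (l + eta)
         - Lam3 xi eta k3 mu (l + eta) + k2 * k3 * dfun xi l / k1)) /\
   (forall (n : nat) (l : R), (2 <= n)%N -> Qfun lam l != 0 ->
      t n.+1 l = Lam1 xi eta k1 lam l * t n (l + eta))).
Proof.
split; first by exists p0 => l h1 h2; apply: p0_val.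
move=> p hp; rewrite (p0_uniq hp) => x t; rewrite /t /x.
have T2 : forall l, Qfun lam l != 0 -> tinterp xi eta k1 k2 k3 (fun a => p0.[xi a]) 2 l
   = Lam1 xi eta k1 lam l * (k1 * p0.[l + eta] + k2 * k3 * dfun xi l) / k1.
  move=> l hl; rewrite (main_claim 0 l) big_nat1 E'_val expr0 mul1r /Lam1 !dQ.
  have -> : l + 0%:R * eta = l by ring.
  have -> : l + 1%:R * eta = l + eta by ring.
  have hD := D_val l.
  have hD' : D.[l] = (k1 * p0.[l + eta] + k2 * k3 * Qfun xi l) / Qfun lam l.
    by rewrite -hD mulfK.
  rewrite hD'; field; by rewrite hl Hk1.
split; first exact: T2.
split.
  move=> l hl h1 h2; rewrite T2 // (p0_val h1 h2) /t1BA; field; by rewrite Hk1.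
move=> n l hn hl; case: n hn => [|[|k]] // _.
rewrite !main_claim big_nat_recl // !E'_val /Lam1 !dQ.
have eP : \prod_(1 <= r < k.+2) Qfun xi (l + eta + r%:R * eta)
   = \prod_(1 <= r < k.+2) Qfun xi (l + r.+1%:R * eta).
  by apply: eq_bigr => r _; congr (Qfun xi _); ring.
have e1 : l + eta + k%:R * eta = l + k.+1%:R * eta by ring.
have e2 : l + eta - eta = l by ring.
have e3 : l + 1%:R * eta = l + eta by ring.
rewrite eP e1 e2 e3 exprS; field; by rewrite hl.
Qed.

End Main.

Theorem lemmaA1 (R : numClosedFieldType) (N L M : nat) (xi : 'I_N -> R)
  (eta k1 k2 k3 : R) (lam : 'I_L -> R) (mu : 'I_M -> R) :
  eta != 0 -> (1 <= N)%N ->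
  (forall a b : 'I_N, a != b -> forall z : int, xi a - xi b != z%:~R * eta) ->
  k1 != 0 -> k2 != 0 -> k3 != 0 ->
  (* Bethe equations *)
  (forall j : 'I_L, k1 * Qfun mu (lam j) * dfun xi (lam j + eta)
                    = k2 * dfun xi (lam j) * Qfun mu (lam j + eta)) ->
  (forall j : 'I_M, k2 * Qfun mu (mu j + eta) * Qfun lam (mu j - eta)
                    = - (k3 * Qfun mu (mu j - eta) * Qfun lam (mu j))) ->
  (* distinctness / admissibility *)
  injective lam -> injective mu ->
  (forall (q : 'I_M) (m : 'I_L), mu q != lam m) ->
  (forall (h : 'I_M) (n : 'I_N), mu h != xi n) ->
  (exists p : {poly R}, is_t1poly xi eta k1 k2 k3 lam mu p) /\
  (forall p : {poly R}, is_t1poly xi eta k1 k2 k3 lam mu p ->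
   let x := fun a : 'I_N => p.[xi a] in
   let t := tinterp xi eta k1 k2 k3 x in
   (forall l : R, Qfun lam l != 0 ->
      t 2%N l = Lam1 xi eta k1 lam l * (k1 * p.[l + eta] + k2 * k3 * dfun xi l) / k1) /\
   (forall l : R, Qfun lam l != 0 -> Qfun lam (l + eta) != 0 -> Qfun mu (l + eta) != 0 ->
      t 2%N l = Lam1 xi eta k1 lam l *
        (Lam1 xi eta k1 lam (l + eta) - Lam2 xi eta k2 lam mu (l + eta)
         - Lam3 xi eta k3 mu (l + eta) + k2 * k3 * dfun xi l / k1)) /\
   (forall (n : nat) (l : R), (2 <= n)%N -> Qfun lam l != 0 ->
      t n.+1 l = Lam1 xi eta k1 lam l * t n (l + eta))).
Proof.
move=> He HN Hx Hk1 Hk2 Hk3 B1 B2 Hl Hm Hml Hmx.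
exact: (final_stmt He Hx Hk1 B1 B2 Hl Hm Hml Hmx).
Qed.
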